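(* Let $\pi\colon(X,T)\to(Y,T)$ be a factor map between topological dynamical systems with $(Y,T)$ minimal, and let $K\ge1$ be an integer. Suppose that for every $y\in Y$ there exists $u\in E(2^X,T)$ such that $\#\,u\circ\pi^{-1}(y)\le K$. Then $\pi$ is almost $k$-to-$1$ for some $k\le K$.
   Context: A topological dynamical system is a pair $(X,T)$ with $X$ a compact metric space and $T$ a homeomorphism. The hyperspace $(2^X,T)$ consists of the nonempty closed subsets of $X$ with the Hausdorff metric and the action $A\mapsto T(A)$. The Ellis semigroup $E(2^X,T)$ is the closure of $\{A\mapsto T^nA: n\in\mathbb{Z}\}$ in $(2^X)^{2^X}$ with the product topology, with composition as operation. For $u\in E(2^X,T)$ and $A\in 2^X$, $u\circ A\in 2^X$ denotes the image of the point $A$ under $u$; equivalently it is the set of $x\in X$ for which there are nets $x_\lambda\in A$ and $m_\lambda\in\mathbb{Z}$ with $T^{m_\lambda}x_\lambda\to x$ and $T^{m_\lambda}\to u$. A factor map $\pi$ is almost $k$-to-$1$ if $\#\pi^{-1}(y)=k$ for all $y$ in a residual subset of $Y$. *)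

(* Defs.v *)
From HB Require Import structures.
From mathcomp Require Import all_boot all_order all_algebra.
From mathcomp Require Import all_classical all_reals all_analysis.
Set Implicit Arguments. Unset Strict Implicit. Unset Printing Implicit Defensive.
Import Order.TTheory GRing.Theory Num.Theory.
Local Open Scope classical_set_scope.
Local Open Scope ring_scope.
Local Open Scope card_scope.

Definition iterz {X : Type} (T Tinv : X -> X) (n : int) (x : X) : X :=
  match n with
  | Posz k => iter k T x
  | Negz k => iter k.+1 Tinv x
  end.

(* (X,T) is a topological dynamical system: X compact metric, T a homeomorphism
   (with inverse Tinv). A pseudometric space that is Hausdorff is a metric space. *)
Definition tds {R : realType} (X : pseudoMetricType R) (T Tinv : X -> X) : Prop :=
  [/\ hausdorff_space X, compact [set: X],
      continuous T /\ continuous Tinv,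
      cancel T Tinv & cancel Tinv T].

(* A is a point of the hyperspace 2^X: a nonempty closed subset. *)
Definition hyper {X : topologicalType} (A : set X) : Prop := closed A /\ A !=set0.

(* Hausdorff-metric closeness: every point of A is within e of B and vice versa
   (this gives d_H(A,B) <= e, and is implied by d_H(A,B) < e). *)
Definition hclose {R : realType} {X : pseudoMetricType R} (e : R) (A B : set X) : Prop :=
  (forall a, A a -> exists2 b, B b & ball a e b) /\
  (forall b, B b -> exists2 a, A a & ball b e a).

(* u belongs to the Ellis semigroup E(2^X,T): u is a self-map of 2^X lying in the
   closure, for the product topology of (2^X)^(2^X) (2^X with the Hausdorff metric),
   of the set of maps A |-> T^n A, n in Z.  A basic neighbourhood of u is given by
   finitely many coordinates As 0, ..., As (m-1) and a radius e > 0. *)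
Definition ellis {R : realType} {X : pseudoMetricType R} (T Tinv : X -> X)
    (u : set X -> set X) : Prop :=
  (forall A, hyper A -> hyper (u A)) /\
  (forall (m : nat) (As : 'I_m -> set X), (forall i, hyper (As i)) ->
   forall e : R, 0 < e ->
   exists n : int, forall i, hclose e (iterz T Tinv n @` As i) (u (As i))).

Definition factor_map {X Y : topologicalType} (T : X -> X) (S : Y -> Y) (pi : X -> Y) :=
  [/\ continuous pi, (forall y, exists x, pi x = y) & (forall x, pi (T x) = S (pi x))].

Definition minimal {Y : topologicalType} (S : Y -> Y) : Prop :=
  forall A : set Y, closed A -> S @` A = A -> A = set0 \/ A = setT.

Definition residual {Y : topologicalType} (G : set Y) : Prop :=
  exists U : nat -> set Y, (forall n, open (U n) /\ dense (U n)) /\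
    \bigcap_n U n `<=` G.

Definition almost_k_to_1 {X Y : topologicalType} (pi : X -> Y) (k : nat) : Prop :=
  exists G : set Y, residual G /\ forall y, G y -> pi @^-1` [set y] #= `I_k.

(* Main.v *)
Require Import Defs.
From HB Require Import structures.
From mathcomp Require Import all_boot all_order all_algebra.
From mathcomp Require Import all_classical all_reals all_analysis.
Import Order.TTheory GRing.Theory Num.Theory.
Local Open Scope classical_set_scope.
Local Open Scope ring_scope.
Local Open Scope card_scope.


Lemma iter_semi {A B : Type} (p : A -> B) (F : A -> A) (G : B -> B) :
  (forall x, p (F x) = G (p x)) -> forall n x, p (iter n F x) = iter n G (p x).
Proof. by move=> h; elim=> [//|n IH] x /=; rewrite h IH. Qed.

Lemma iter_cancel {A : Type} (f g : A -> A) : cancel f g -> forall n, cancel (iter n f) (iter n g).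
Proof.
move=> h; elim=> [//|n IH] x.
by rewrite iterSr /= h IH.
Qed.

Lemma iter_cont {Z : topologicalType} (f : Z -> Z) : continuous f -> forall n, continuous (iter n f).
Proof.
move=> h; elim=> [|n IH] x /=; first exact: cvg_id.
exact: (@continuous_comp _ _ _ (iter n f) f x (IH x) (h _)).
Qed.

Lemma fmin {R : realType} (P : nat -> R -> Prop) N :
  (forall n d d', 0 < d' -> d' <= d -> P n d -> P n d') ->
  (forall n, (n < N)%N -> exists2 d, 0 < d & P n d) ->
  exists2 d, 0 < d & forall n, (n < N)%N -> P n d.
Proof.
move=> mono; elim: N => [|N IH] h; first by exists 1.
have [d1 d1p H1] := IH (fun n hn => h n (ltnW hn)).
have [d2 d2p H2] := h N (ltnSn N).
exists (Num.min d1 d2); first by rewrite lt_min d1p d2p.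
move=> n; rewrite ltnS leq_eqVlt => /orP[/eqP->|hn].
  by apply: mono H2; rewrite ?lt_min ?d1p ?d2p // ge_min lexx orbT.
by apply: mono (H1 n hn); rewrite ?lt_min ?d1p ?d2p // ge_min lexx.
Qed.

Lemma cont_ball {R : realType} {X Z : pseudoMetricType R} (f : X -> Z) :
  continuous f -> forall a (eps : R), 0 < eps ->
  exists2 d, 0 < d & forall x, ball a d x -> ball (f a) eps (f x).
Proof.
move=> fc a eps ep.
have /nbhs_ballP[d dp H] : nbhs a (fun x => ball (f a) eps (f x)).
  by apply: (cvg_ball (fc a) ep).
exists d => // x hx; exact: (H x hx).
Qed.

Lemma half_interior {R : realType} {X : pseudoMetricType R} (c x : X) (e : R) :
  0 < e -> ball c (e / 2) x -> (ball c e)° x.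
Proof.
move=> ep hx; rewrite /interior /=.
apply/nbhs_ballP; exists (e / 2); first by apply: divr_gt0.
move=> z hz; rewrite [e](splitr e); exact: ball_triangle hx hz.
Qed.

Definition Ucov {R : realType} {X Y : pseudoMetricType R} (pi : X -> Y) (k : nat) (e : R) : set Y :=
  [set y | exists c : nat -> X, forall x, pi x = y -> exists2 i, (i < k)%N & (ball (c i) e)° x].

Lemma Ucov_open {R : realType} {X Y : pseudoMetricType R} (pi : X -> Y) k e :
  compact [set: X] -> hausdorff_space Y -> continuous pi -> open (Ucov pi k e).
Proof.
move=> cX hY cpi.
pose V (c : nat -> X) := \bigcup_(i in [set i | (i < k)%N]) (ball (c i) e)°.
have -> : Ucov pi k e = \bigcup_(c in [set: nat -> X]) ~` (pi @` ~` V c).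
  apply/seteqP; split=> y.
    move=> [c Hc]; exists c => //= -[x Vx pxy].
    by apply: Vx; have [i ik hi] := Hc x pxy; exists i.
  move=> [c _ /= Hc]; exists c => x pxy.
  have : V c x by apply: contrapT => nV; apply: Hc; exists x.
  by move=> [i ik hi]; exists i.
apply: bigcup_open => c _; rewrite openC.
apply: compact_closed => //; apply: continuous_compact.
  exact: continuous_subspaceT.
apply: (subclosed_compact _ cX) => //.
rewrite closedC; apply: bigcup_open => i _; exact: open_interior.
Qed.
Lemma orbit_hits {Y : topologicalType} (S Sinv : Y -> Y) :
  continuous S -> continuous Sinv -> cancel S Sinv -> cancel Sinv S -> minimal S ->
  forall W, open W -> W !=set0 -> forall y, exists n, W (iter n S y) \/ W (iter n Sinv y).
Proof.
move=> cS cSi SK SiK mS W oW [w Ww] y.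
pose A := [set z | forall n, ~ W (iter n S z) /\ ~ W (iter n Sinv z)].
have cA : closed A.
  have -> : A = \bigcap_(n in [set: nat]) (iter n S @^-1` (~` W) `&` iter n Sinv @^-1` (~` W)).
    by apply/seteqP; split=> z /= h n; [move=> _; exact: h | exact: h].
  apply: closed_bigI => n _; apply: closedI.
    by move/continuous_closedP: (iter_cont _ cS n); apply; rewrite closedC.
  by move/continuous_closedP: (iter_cont _ cSi n); apply; rewrite closedC.
have SA : S @` A = A.
  apply/seteqP; split.
    move=> _ [z Az <-] n; split.
      by rewrite -iterSr; exact: (Az n.+1).1.
    case: n => [|n]; first exact: (Az 1%N).1.
    by rewrite iterSr SK; exact: (Az n).2.
  move=> z Az; exists (Sinv z); last exact: SiK.
  move=> n; split; last by rewrite -iterSr; exact: (Az n.+1).2.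
  case: n => [|n]; first exact: (Az 1%N).2.
  by rewrite iterSr SiK; exact: (Az n).1.
case: (mS A cA SA) => hA.
  apply: contrapT => hn; have : A y.
    move=> n; split => hw; apply: hn; exists n; by [left|right].
  by rewrite hA.
have : A w by rewrite hA.
by move=> /(_ 0%N) [] /=.
Qed.
Lemma ext_inj {T : Type} (d : nat -> T) k x :
  (forall i j, (i < k)%N -> (j < k)%N -> d i = d j -> i = j) ->
  (forall i, (i < k)%N -> x <> d i) ->
  forall i j, (i < k.+1)%N -> (j < k.+1)%N ->
  (if i == k then x else d i) = (if j == k then x else d j) -> i = j.
Proof.
move=> di xd i j ik jk.
have lt : forall l, (l < k.+1)%N -> l != k -> (l < k)%N.
  by move=> l lk nl; rewrite ltn_neqAle nl -ltnS lk.
case: (eqVneq i k) => [->|nik]; case: (eqVneq j k) => [->|njk] //.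
- by move=> e; case: (xd j (lt j jk njk) e).
- by move=> e; case: (xd i (lt i ik nik) (esym e)).
- exact: di (lt i ik nik) (lt j jk njk).
Qed.

Definition injfam {T : Type} (F : set T) (k : nat) (d : nat -> T) :=
  (forall i j, (i < k)%N -> (j < k)%N -> d i = d j -> i = j) /\ (forall i, (i < k)%N -> F (d i)).

Lemma pigeon (g : nat -> nat) k : (forall j, (j < k.+1)%N -> (g j < k)%N) ->
  exists j j', [/\ (j < k.+1)%N, (j' < k.+1)%N, j != j' & g j = g j'].
Proof.
case: k => [|k] hg; first by have := hg 0%N isT.
apply: contrapT => hn.
pose g' (j : 'I_k.+2) : 'I_k.+1 := inord (g j).
have ig : injective g'.
  move=> j j' /(congr1 (@nat_of_ord _)); rewrite /g' !inordK ?hg // => e.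
  apply/val_inj => /=; apply: contrapT => ne; apply: hn; exists j, j'; split => //.
  exact/eqP.
by have := leq_card g' ig; rewrite !card_ord ltnn.
Qed.

Lemma card_final {T : Type} (F : set T) k d :
  injfam F k d -> (forall d', ~ injfam F k.+1 d') -> F #= `I_k.
Proof.
move=> [di dF] hno.
have -> : F = d @` `I_k.
  apply/seteqP; split => [x Fx|_ [i ik <-]]; last exact: dF.
  apply: contrapT => nx.
  apply: (hno (fun i => if i == k then x else d i)); split.
    apply: ext_inj => // i ik e; apply: nx; by exists i.
  move=> i ik; case: (eqVneq i k) => [_|nik] //.
  by apply: dF; rewrite ltn_neqAle nik -ltnS ik.
apply: inj_card_eq => i j; rewrite !inE /= => ik jk; exact: di.
Qed.

Lemma no_fam {R : realType} {X : pseudoMetricType R} (F : set X) k :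
  hausdorff_space X ->
  (forall e, 0 < e -> exists c : nat -> X, forall x, F x -> exists2 i, (i < k)%N & ball (c i) e x) ->
  forall d, ~ injfam F k.+1 d.
Proof.
move=> hX hc d [di dF].
move: hX; rewrite ball_hausdorff => hX.
pose P i (r : R) := forall j, (j < k.+1)%N -> i != j -> forall z, ball (d i) r z -> ball (d j) r z -> False.
have [r rp Hr] : exists2 r, 0 < r & forall i, (i < k.+1)%N -> P i r.
  apply: fmin.
    move=> i r r' r'p le h j jk ij z h1 h2; apply: (h j jk ij z).
      exact: le_ball h1.
    exact: le_ball h2.
  move=> i ik.
  have [r rp Hr] : exists2 r, 0 < r & forall j, (j < k.+1)%N ->
       i != j -> forall z, ball (d i) r z -> ball (d j) r z -> False.
    apply: (fmin (fun j r => i != j -> forall z, ball (d i) r z -> ball (d j) r z -> False)).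
      move=> j r r' r'p le h ij z h1 h2; apply: (h ij z).
        exact: le_ball h1.
      exact: le_ball h2.
    move=> j jk.
    have [ij|nij] := eqVneq i j; first by exists 1 => //; rewrite ij eqxx.
    have dne : d i != d j by apply/eqP => /(di _ _ ik jk) e; rewrite e eqxx in nij.
    have [[r1 r2] /= /eqP H0] := hX _ _ dne.
    exists (Num.min r1%:num r2%:num); first by rewrite lt_min !gt0.
    move=> _ z h1 h2.
    have : (ball (d i) r1%:num `&` ball (d j) r2%:num) z.
      split; [apply: le_ball h1 | apply: le_ball h2]; by rewrite ge_min lexx ?orbT.
    by rewrite H0.
  by exists r.
have [c Hc] := hc r rp.
have [g Hg] : exists g : nat -> nat, forall j, (j < k.+1)%N -> (g j < k)%N /\ ball (c (g j)) r (d j).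
  have : forall j, exists i, (j < k.+1)%N -> (i < k)%N /\ ball (c i) r (d j).
    move=> j; have [jk|njk] := boolP (j < k.+1)%N; last by exists 0%N.
    by have [i ik hi] := Hc _ (dF j jk); exists i.
  by move/choice => [g Hg]; exists g.
have [j [j' [jk j'k nj e]]] := @pigeon g k (fun j jk => (Hg j jk).1).
apply: (Hr j jk j' j'k nj (c (g j))).
  exact/ball_sym/(Hg j jk).2.
by rewrite e; exact/ball_sym/(Hg j' j'k).2.
Qed.
Lemma build_fam {R : realType} {X : pseudoMetricType R} (F : set X) k e (x0 : X) : 0 < e ->
  (forall c : nat -> X, exists x, F x /\ forall i, (i < k)%N -> ~ (ball (c i) e)° x) ->
  exists d, injfam F k.+1 d.
Proof.
move=> ep hF.
suff : forall j, (j <= k.+1)%N -> exists d, injfam F j d by apply.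
elim=> [|j IH] jk; first by exists (fun _ => x0); split.
have [d [di dF]] := IH (ltnW jk).
have [x [Fx hx]] := hF d.
have xd : forall i, (i < j)%N -> x <> d i.
  move=> i ij e'; apply: (hx i (leq_trans ij jk)); rewrite e'.
  exact: nbhsx_ballx.
exists (fun i => if i == j then x else d i); split.
  exact: ext_inj.
move=> i ik; case: (eqVneq i j) => [_|nij] //.
by apply: dF; rewrite ltn_neqAle nij -ltnS ik.
Qed.

Lemma fam_transfer {A B : Type} (pi : A -> B) (F : A -> A) (G : B -> B) z n d :
  injective F -> (forall x, pi (F x) = G (pi x)) ->
  injfam (pi @^-1` [set z]) n d -> injfam (pi @^-1` [set G z]) n (F \o d).
Proof.
move=> iF hF [di dF]; split.
  by move=> i j ik jk /iF; exact: di.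
by move=> i ik /=; rewrite hF (dF i ik).
Qed.

Lemma notU_fiber {R : realType} {X Y : pseudoMetricType R} (pi : X -> Y) k e z :
  ~ Ucov pi k e z ->
  forall c : nat -> X, exists x, (pi @^-1` [set z]) x /\ forall i, (i < k)%N -> ~ (ball (c i) e)° x.
Proof.
move=> nU c; apply: contrapT => hn; apply: nU; exists c => x pxz.
apply: contrapT => hi; apply: hn; exists x; split => // i ik hb; apply: hi; by exists i.
Qed.

Arguments iter_semi {A B p F G}.
Arguments iter_cancel {A f g}.
Arguments iter_cont {Z f}.
Arguments cont_ball {R X Z f}.
Arguments orbit_hits {Y S Sinv}.
Lemma compact_increasing {Y : topologicalType} (f : nat -> set Y) :
  compact [set: Y] -> (forall n, open (f n)) ->
  (forall n m, (n <= m)%N -> f n `<=` f m) -> (forall y, exists n, f n y) ->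
  exists N, forall y, f N y.
Proof.
move=> cY fo mono cov; apply: contrapT => hn.
have hne : forall N, (~` f N) !=set0.
  move=> N; apply: contrapT => h; apply: hn; exists N => y.
  apply: contrapT => ny; apply: h; by exists y.
pose F := filter_from [set: nat] (fun N => ~` f N).
have FF : ProperFilter F.
  apply: filter_from_proper; last by move=> i _; exact: hne.
  apply: filter_from_filter; first by exists 0%N.
  move=> i j _ _; exists (maxn i j) => // y hy; split => hf; apply: hy.
    exact: (mono i _ (leq_maxl i j)).
  exact: (mono j _ (leq_maxr i j)).
have FT : F setT by exists 0%N.
have [y [_ cy]] := cY F FF FT.
have [M fM] := cov y.
have FM : F (~` f M) by exists M.
have nM : nbhs y (f M) by apply: open_nbhs_nbhs; split.
by have [z [nz fz]] := cy _ _ FM nM.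
Qed.
Arguments compact_increasing {Y f}.
Lemma Ucov_dense (R : realType) (X Y : pseudoMetricType R)
    (T Tinv : X -> X) (S Sinv : Y -> Y) (pi : X -> Y) (K : nat) :
  tds T Tinv -> tds S Sinv -> factor_map T S pi -> minimal S ->
  (forall y : Y, exists u : set X -> set X,
      ellis T Tinv u /\ u (pi @^-1` [set y]) #<= `I_K) ->
  forall e, 0 < e -> dense (Ucov pi K e).
Proof.
move=> [hX cX [cT cTi] TK TiK] [hY cY [cS cSi] SK SiK] [cpi spi hpi] mS hu e ep O [y0 Oy0] oO.
have hpiTi : forall x, pi (Tinv x) = Sinv (pi x).
  by move=> x; rewrite -[LHS]SK -hpi TiK.
have hT := iter_semi hpi; have hTi := iter_semi hpiTi.
pose f n := \bigcup_(m in [set m | (m <= n)%N]) (iter m S @^-1` O `|` iter m Sinv @^-1` O).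
have [N hN0] : exists N, forall y, f N y.
  apply: compact_increasing => //.
  - move=> n; apply: bigcup_open => m _; apply: openU.
      by apply: open_comp => // x _; exact: iter_cont.
    by apply: open_comp => // x _; exact: iter_cont.
  - move=> n n' nn' y [m mn hm]; exists m => //; exact: leq_trans mn nn'.
  - move=> y; have [m hm] := orbit_hits cS cSi SK SiK mS O oO (ex_intro _ y0 Oy0) y.
    by exists m; exists m => //=.
have hN : forall y, exists2 m, (m <= N)%N & (O (iter m S y) \/ O (iter m Sinv y)).
  by move=> y; have [m mN hm] := hN0 y; exists m.
have [u [ellu Ble]] := hu y0.
pose A := pi @^-1` [set y0].
have [x0 px0] := spi y0.
move/pcard_leP/injfunPex: Ble => [fb fbS fbI].
have [b hb0] : exists b : nat -> X, forall i a, u A a -> fb a = i -> a = b i.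
  suff : forall i, exists x, forall a, u A a -> fb a = i -> a = x.
    by move/choice => [b hb]; exists b.
  move=> i.
  have [[a [ua fai]]|na] := pselect (exists a, u A a /\ fb a = i).
    exists a => a' ua' fai'; apply: fbI; rewrite ?inE //; by rewrite fai fai'.
  by exists x0 => a ua fai; exfalso; apply: na; exists a.
have hb : forall a, u A a -> exists2 i, (i < K)%N & a = b i.
  move=> a ua; exists (fb a); first exact: fbS.
  exact: hb0.
have [d dp Hd] : exists2 d, 0 < d & forall m, (m < N.+1)%N -> forall i, (i < K)%N ->
    forall x, ball (b i) d x -> ball (iter m T (b i)) (e/2) (iter m T x) /\
                                ball (iter m Tinv (b i)) (e/2) (iter m Tinv x).
  apply: fmin.
    move=> m d d' d'p le h i ik x bx; apply: h => //; exact: le_ball bx.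
  move=> m _.
  apply: (fmin (fun i d => forall x, ball (b i) d x -> ball (iter m T (b i)) (e/2) (iter m T x) /\
                                ball (iter m Tinv (b i)) (e/2) (iter m Tinv x))).
    move=> i d d' d'p le h x bx; apply: h; exact: le_ball bx.
  move=> i _.
  have e2 : 0 < e / 2 by apply: divr_gt0.
  have [d1 d1p H1] := cont_ball (iter_cont cT m) (b i) _ e2.
  have [d2 d2p H2] := cont_ball (iter_cont cTi m) (b i) _ e2.
  exists (Num.min d1 d2); first by rewrite lt_min d1p d2p.
  move=> x bx; split; [apply: H1 | apply: H2]; apply: le_ball bx; by rewrite ge_min lexx ?orbT.
have hA : hyper A.
  split; last by exists x0.
  move/continuous_closedP: cpi; apply.
  by apply: accessible_closed_set1; apply: hausdorff_accessible.
have [n hn] := ellu.2 1%N (fun _ => A) (fun _ => hA) d dp.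
have [hn1 _] := hn ord0.
pose y1 := iterz S Sinv n y0.
have h1 : forall x, pi x = y1 -> exists2 i, (i < K)%N & ball (b i) d x.
  move=> x px.
  have [a Aa xa] : exists2 a, A a & x = iterz T Tinv n a.
    rewrite /y1 in px; clear -px hT hTi SK SiK TK TiK; case: n px => k px; rewrite /iterz in px *.
      exists (iter k Tinv x); last by rewrite (iter_cancel TiK).
      by rewrite /A /= hTi px (iter_cancel SK).
    exists (iter k.+1 T x); last by rewrite (iter_cancel TK).
    by change (pi (iter k.+1 T x) = y0); rewrite hT px (iter_cancel SiK).
  have [b' ub' xb'] := hn1 x (ex_intro2 _ _ a Aa (esym xa)).
  have [i ik eb] := hb b' ub'.
  by exists i => //; apply: ball_sym; rewrite -eb.
have [m mN [Om|Om]] := hN y1.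
  exists (iter m S y1); split => //.
  exists (fun j => iter m T (b j)) => x' px'.
  pose x := iter m Tinv x'.
  have px : pi x = y1 by rewrite /x hTi px' (iter_cancel SK).
  have [i ik bx] := h1 x px.
  exists i => //; apply: half_interior => //.
  by rewrite -[x'](iter_cancel TiK m); exact: (Hd m mN i ik x bx).1.
exists (iter m Sinv y1); split => //.
exists (fun j => iter m Tinv (b j)) => x' px'.
pose x := iter m T x'.
have px : pi x = y1 by rewrite /x hT px' (iter_cancel SiK).
have [i ik bx] := h1 x px.
exists i => //; apply: half_interior => //.
by rewrite -[x'](iter_cancel TK m); exact: (Hd m mN i ik x bx).2.
Qed.

Lemma min_nat (P : nat -> Prop) n : P n ->
  exists k, [/\ P k, (k <= n)%N & forall j, (j < k)%N -> ~ P j].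
Proof.
elim/ltn_ind: n => n IH Pn.
have [[j jn Pj]|nj] := pselect (exists2 j, (j < n)%N & P j).
  have [k [Pk kj hk]] := IH j jn Pj; exists k; split => //.
  exact: leq_trans kj (ltnW jn).
exists n; split => // j jn Pj; apply: nj; by exists j.
Qed.

Lemma small_inv (R : realType) (e : R) : 0 < e -> exists n : nat, n.+1%:R^-1 < e.
Proof.
move=> ep; have [N _ hN] := near_infty_natSinv_lt (PosNum ep).
by exists N; apply: (hN N) => /=.
Qed.

Theorem lemma5p2 (R : realType) (X Y : pseudoMetricType R)
    (T Tinv : X -> X) (S Sinv : Y -> Y) (pi : X -> Y) (K : nat) :
  tds T Tinv -> tds S Sinv -> factor_map T S pi -> minimal S ->
  (1 <= K)%N ->
  (forall y : Y, exists u : set X -> set X,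
      ellis T Tinv u /\ u (pi @^-1` [set y]) #<= `I_K) ->
  exists k : nat, (k <= K)%N /\ almost_k_to_1 pi k.
Proof.
move=> tX tY fm mS K1 hu.
have hdense := @Ucov_dense R X Y T Tinv S Sinv pi K tX tY fm mS hu.
move: (tX) (tY) (fm) => [hX cX [cT cTi] TK TiK] [hY cY [cS cSi] SK SiK] [cpi spi hpi].
have hpiTi : forall x, pi (Tinv x) = Sinv (pi x).
  by move=> x; rewrite -[LHS]SK -hpi TiK.
have hT := iter_semi hpi; have hTi := iter_semi hpiTi.
pose P k := forall e, 0 < e -> dense (Ucov pi k e).
have [k0 [Pk0 k0K hmin]] := @min_nat P K hdense.
exists k0; split => //.
exists (fun y => pi @^-1` [set y] #= `I_k0); split => // .
exists (fun n => Ucov pi k0 n.+1%:R^-1); split.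
  move=> n; split; first exact: Ucov_open.
  by apply: Pk0; rewrite invr_gt0 ltr0n.
move=> y hy.
have hyn : forall n, Ucov pi k0 n.+1%:R^-1 y by move=> n; exact: hy.
have [x0 px0] := spi y.
have hup : forall d', ~ injfam (pi @^-1` [set y]) k0.+1 d'.
  apply: no_fam => // e ep.
  have [n ne] := small_inv _ _ ep.
  have [c hc] := hyn n.
  exists c => x px; have [i ik hi] := hc x px.
  exists i => //; apply: (le_ball (ltW ne)); exact: interior_subset hi.
have [d hd] : exists d, injfam (pi @^-1` [set y]) k0 d.
  case: k0 {Pk0 k0K hy hyn hup} hmin => [|j] hmin.
    by exists (fun _ => x0); split.
  have nP : ~ P j by apply: hmin.
  have [e ep nd] : exists2 e, 0 < e & ~ dense (Ucov pi j e).
    apply: contrapT => hn; apply: nP => e ep; apply: contrapT => nd.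
    by apply: hn; exists e.
  have [W0 [[w0 oO] OU]] := denseNE nd.
  have [oO' Oo] := oO.
  have [m [Om|Om]] := orbit_hits cS cSi SK SiK mS W0 oO' (ex_intro _ w0 Oo) y.
    have nU : ~ Ucov pi j e (iter m S y).
      by move=> hU; have : (W0 `&` Ucov pi j e) (iter m S y) by [] ; rewrite OU.
    have [d hd] := build_fam _ _ _ x0 ep (notU_fiber _ _ _ _ nU).
    exists (iter m Tinv \o d).
    rewrite -[y in [set y]](iter_cancel SK m).
    apply: fam_transfer hd => //.
    exact: can_inj (iter_cancel TiK m).
  have nU : ~ Ucov pi j e (iter m Sinv y).
    by move=> hU; have : (W0 `&` Ucov pi j e) (iter m Sinv y) by [] ; rewrite OU.
  have [d hd] := build_fam _ _ _ x0 ep (notU_fiber _ _ _ _ nU).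
  exists (iter m T \o d).
  rewrite -[y in [set y]](iter_cancel SiK m).
  apply: fam_transfer hd => //.
  exact: can_inj (iter_cancel TK m).
exact: card_final hd hup.
Qed.
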